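(* Let $r\in[0,1]^A$ and for $\tau>0$ set $f^\tau(\theta)=\pi_\theta^\top(r-\tau\log\pi_\theta)$, where $\pi_\theta=\mathrm{softmax}(\theta)$, and $f^{*_\tau}:=\max_\theta f^\tau(\theta)$ (attained at $\pi_\theta=\mathrm{softmax}(r/\tau)$). For a fixed $\theta$ and $0<\tau_2<\tau_1$, $$f^{*_{\tau_2}}-f^{\tau_2}(\theta)\le f^{*_{\tau_1}}-f^{\tau_1}(\theta)+\tau_1W\Big(\frac{A-1}{e}\Big)+\tau_1\log A,$$ where $W$ is the principal branch of the Lambert $W$ function ($W(x)e^{W(x)}=x$ for $x\ge0$).
   Context: $\log\pi$ denotes the coordinatewise logarithm. *)

(* Defs.v *)
From HB Require Import structures.
From mathcomp Require Import all_boot all_order all_algebra.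
From mathcomp Require Import all_classical all_reals all_analysis.
Set Implicit Arguments. Unset Strict Implicit. Unset Printing Implicit Defensive.
Import Order.TTheory GRing.Theory Num.Theory.
Local Open Scope ring_scope.
Local Open Scope classical_set_scope.

(* pi_theta = softmax(theta), actions indexed by 'I_n (n = |A|). *)
Definition softmax (R : realType) (n : nat) (theta : 'I_n -> R) (a : 'I_n) : R :=
  expR (theta a) / \sum_(b < n) expR (theta b).

Definition ftau (R : realType) (n : nat) (r : 'I_n -> R) (tau : R)
  (theta : 'I_n -> R) : R :=
  \sum_(a < n) softmax theta a * (r a - tau * ln (softmax theta a)).

(* f^{*tau} = max_theta f^tau(theta), taken as the supremum over all theta. *)
Definition fstar (R : realType) (n : nat) (r : 'I_n -> R) (tau : R) : R :=
  sup (range (ftau r tau)).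

Definition LambertW (R : realType) (x : R) : R :=
  xget 0 [set w : R | -1 <= w /\ w * expR w = x].

(* Main.v *)
Require Import Defs.
From HB Require Import structures.
From mathcomp Require Import all_boot all_order all_algebra.
From mathcomp Require Import all_classical all_reals all_analysis.
From mathcomp Require Import ring lra.
Import Order.TTheory GRing.Theory Num.Theory.
Local Open Scope ring_scope.

Set Implicit Arguments. Unset Strict Implicit.
Section Aux.
Variables (R : realType) (n : nat).
Implicit Types (theta : 'I_n -> R).

Lemma sumexp_gt0 theta (a : 'I_n) : 0 < \sum_(b < n) expR (theta b).
Proof.
rewrite (bigD1 a) //=.
have := expR_gt0 (theta a).
have : 0 <= \sum_(i < n | i != a) expR (theta i) by apply: sumr_ge0 => i _; apply/ltW/expR_gt0.
lra.
Qed.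

Lemma sm_gt0 theta a : 0 < softmax theta a.
Proof. by rewrite /softmax divr_gt0 // ?expR_gt0 // (sumexp_gt0 theta a). Qed.

Lemma sm_sum theta (a : 'I_n) : \sum_(b < n) softmax theta b = 1.
Proof.
rewrite /softmax -mulr_suml divff //.
by have := sumexp_gt0 theta a; rewrite lt0r => /andP[].
Qed.

Lemma sm_le1 theta a : softmax theta a <= 1.
Proof.
rewrite -(sm_sum theta a) (bigD1 a) //=.
have : 0 <= \sum_(i < n | i != a) softmax theta i by apply: sumr_ge0 => i _; apply/ltW/sm_gt0.
lra.
Qed.

Definition Hent theta := \sum_(a < n) - (softmax theta a * ln (softmax theta a)).

Lemma ftau_split (r : 'I_n -> R) tau theta :
  ftau r tau theta = \sum_(a < n) softmax theta a * r a + tau * Hent theta.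
Proof.
rewrite /ftau /Hent mulr_sumr -big_split; apply: eq_bigr => a _ /=; ring.
Qed.

Lemma Hent_ge0 theta : 0 <= Hent theta.
Proof.
apply: sumr_ge0 => a _.
have h1 := sm_gt0 theta a; have h2 := ln_le0 (sm_le1 theta a).
rewrite oppr_ge0; exact: mulr_ge0_le0 (ltW h1) h2.
Qed.

Lemma ln_ge1V (y : R) : 0 < y -> - ln y <= y^-1 - 1.
Proof.
move=> y0.
have := expR_ge1Dx (ln y^-1).
rewrite lnK ?posrE ?invr_gt0 // lnV ?posrE //.
lra.
Qed.

Lemma Hent_le theta : (0 < n)%N -> Hent theta <= ln n%:R.
Proof.
move=> n0.
have nR : 0 < (n%:R : R) by rewrite ltr0n.
pose a0 : 'I_n := Ordinal n0.
have key : forall a, - (softmax theta a * ln (softmax theta a)) <=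
    softmax theta a * ln n%:R + (n%:R^-1 - softmax theta a).
  move=> a; set p := softmax theta a.
  have p0 : 0 < p by apply: sm_gt0.
  have y0 : 0 < n%:R * p by rewrite mulr_gt0.
  have L : ln (n%:R * p) = ln n%:R + ln p by rewrite lnM ?posrE.
  have e1 : p * (n%:R * p)^-1 = n%:R^-1.
    by field; apply/andP; split; rewrite lt0r_neq0.
  have h : p * (- ln (n%:R * p)) <= p * ((n%:R * p)^-1 - 1).
    by apply: ler_wpM2l; [exact: ltW | exact: ln_ge1V].
  rewrite L mulrBr mulr1 e1 mulrN mulrDr in h.
  lra.
apply: le_trans (ler_sum _ (fun a _ => key a)) _.
rewrite big_split /= big_split /= -mulr_suml sm_sum // sumrN sm_sum //.
rewrite sumr_const card_ord.
have -> : (n%:R : R)^-1 *+ n = 1.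
  by rewrite -(mulr_natr (n%:R^-1)) mulVf // lt0r_neq0.

lra.
Qed.

Lemma Hent_le' theta : (0 < n)%N -> Hent theta <= ln n%:R.
Proof. exact: Hent_le. Qed.

Lemma spr_le1 (r : 'I_n -> R) theta (a0 : 'I_n) : (forall a, 0 <= r a <= 1) ->
  \sum_(a < n) softmax theta a * r a <= 1.
Proof.
move=> hr; rewrite -(sm_sum theta a0); apply: ler_sum => a _.
have hp := sm_gt0 theta a; have /andP[h0 h1] := hr a.
by rewrite -[X in _ <= X]mulr1 ler_pM2l.
Qed.

End Aux.

Theorem lemma16 (R : realType) (n : nat) (hn : (0 < n)%N)
  (r : 'I_n -> R) (hr : forall a, 0 <= r a <= 1)
  (theta : 'I_n -> R) (tau1 tau2 : R) (h2 : 0 < tau2) (h12 : tau2 < tau1) :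
  fstar r tau2 - ftau r tau2 theta <=
    fstar r tau1 - ftau r tau1 theta
    + tau1 * LambertW ((n%:R - 1) / expR 1) + tau1 * ln (n%:R).
Proof.
pose a0 : 'I_n := Ordinal hn.
have le21 : forall th, ftau r tau2 th <= ftau r tau1 th.
  move=> th; rewrite !ftau_split lerD2l; have := Hent_ge0 th; nra.
have ub : has_ubound (range (ftau r tau1)).
  exists (1 + tau1 * ln n%:R) => _ [th _ <-].
  rewrite ftau_split lerD ?(spr_le1 th a0) //.
  have := Hent_le th hn; nra.
have fs : fstar r tau2 <= fstar r tau1.
  apply: ge_sup; first by exists (ftau r tau2 theta), theta.
  move=> _ [th _ <-]; apply: le_trans (le21 th) _.
  by apply: ub_le_sup => //; exists th.
have df : ftau r tau1 theta - ftau r tau2 theta <= tau1 * ln n%:R.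
  rewrite !ftau_split.
  have := Hent_ge0 theta; have := Hent_le theta hn.
  have : tau1 * Hent theta <= tau1 * ln n%:R.
    have := Hent_le theta hn; nra.
  nra.
have W0 : 0 <= LambertW ((n%:R - 1) / expR 1 : R).
  rewrite /LambertW; case: xgetP => [w _ [hw1 hw2] | _ //].
  have x0 : 0 <= (n%:R - 1) / expR 1 :> R.
    by rewrite divr_ge0 ?subr_ge0 ?ler1n // ltW // expR_gt0.
  rewrite leNgt; apply/negP => wn.
  have : w * expR w < 0 by rewrite (pmulr_llt0 _ (expR_gt0 w)).
  rewrite hw2; lra.
have : 0 <= tau1 * LambertW ((n%:R - 1) / expR 1 : R).
  by rewrite mulr_ge0 // ltW // (lt_trans h2).
lra.
Qed.
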